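(* Let $G(n,n_1,n_2,n_3,p_1,p_2,p_3)$ be a three-layer stochastic block model network satisfying the standing assumptions below. Fix any one of the three layers as target layer, and apply ReduceWeight to all communities of the other two layers. Then the (expected, weighted) modularity of the target layer's partition in the resulting weighted graph is strictly larger than in the original graph.
   Context: Multi-layer stochastic block model $G(n,n_1,\dots,n_L,p_1,\dots,p_L)$: a random graph on $n$ nodes with $L$ layers. For each layer $l$ the nodes are partitioned into $n_l$ planted communities of size $s_l=n/n_l$; independently for each layer, each pair of distinct nodes in a common community of layer $l$ receives an edge from layer $l$ with probability $p_l$; the graph is the simple union of all generated edges. The partitions of different layers are independent: for any $k\ge2$ distinct layers and one community from each, their intersection has $n/(n_{l_1}\cdots n_{l_k})$ nodes (in expectation). Standing assumptions: $n_l\ge4$, $p_l\in[0.05,1]$ for every layer, and $n\ge2\prod_l n_l$. Retention probability of a layer $l$: for a community $i$ of layer $l$ with size $s_l$, $e^i_{ll}$ internal edges and $e^i_{lout}$ outgoing edges, $\widehat{p^i_l}=e^i_{ll}/(\tfrac12 s_l(s_l-1))$, $\widehat{q^i_l}=e^i_{lout}/(s_l(n-s_l))$, $q^i_l=\widehat{q^i_l}/\widehat{p^i_l}$ (computed from expected counts, giving a common value $q_l$ for the layer). ReduceWeight on layer $l$: viewing the graph as weighted, multiply the weight of every internal edge of every community of layer $l$ by $q_l$ (so an edge internal to communities of both reduced layers $a,b$ has its weight multiplied by $q_aq_b$). Weighted modularity of a layer: as $Q_l=\sum_i\big(\frac{e^i_{ll}}{e}-(\frac{d^i_l}{2e})^2\big)$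 with $d^i_l=2e^i_{ll}+e^i_{lout}$, where $e^i_{ll}$, $e^i_{lout}$, $e$ are the (expected) sums of edge weights of internal edges, outgoing edges and all edges. *)

(* Defs.v *)
(* Expected-value model of the multi-layer SBM
   G(n, n_1..n_L, p_1..p_L), layers indexed by 'I_L.                        *)
From mathcomp Require Import all_boot all_order all_algebra.
Set Implicit Arguments. Unset Strict Implicit. Unset Printing Implicit Defensive.
Import Order.TTheory GRing.Theory Num.Theory.
Local Open Scope ring_scope.

Section MSBM.
Variables (R : realFieldType) (L : nat).
Variables (n : nat) (nl : 'I_L -> nat) (p : 'I_L -> R).

Definition comm_size (l : 'I_L) : R := n%:R / (nl l)%:R.

(* Expected number of ordered pairs (u,v), u <> v, lying in a common
   community in every layer of T: each node u has n/(prod_{l in T} n_l)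
   nodes (itself included) in the intersection of its communities. *)
Definition pairs_atleast (T : {set 'I_L}) : R :=
  n%:R * (n%:R / (\prod_(l in T) (nl l)%:R) - 1).

(* Expected number of ordered pairs (u,v), u <> v, whose set of layers in
   which they share a community is exactly S (inclusion-exclusion). *)
Definition pairs_exact (S : {set 'I_L}) : R :=
  \sum_(T : {set 'I_L} | S \subset T) (-1) ^+ (#|T| - #|S|) * pairs_atleast T.

Definition edge_prob (S : {set 'I_L}) : R := 1 - \prod_(l in S) (1 - p l).

(* A weighting assigns to each pair type S the weight of its edge. *)
Definition exp_total (w : {set 'I_L} -> R) : R :=
  2^-1 * \sum_(S : {set 'I_L}) pairs_exact S * edge_prob S * w S.

Definition exp_internal (l : 'I_L) (w : {set 'I_L} -> R) : R :=
  (2 * (nl l)%:R)^-1 *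
    \sum_(S : {set 'I_L} | l \in S) pairs_exact S * edge_prob S * w S.

Definition exp_out (l : 'I_L) (w : {set 'I_L} -> R) : R :=
  ((nl l)%:R)^-1 *
    \sum_(S : {set 'I_L} | l \notin S) pairs_exact S * edge_prob S * w S.

Definition modularity (l : 'I_L) (w : {set 'I_L} -> R) : R :=
  \sum_(i < nl l)
     (exp_internal l w / exp_total w
      - ((2 * exp_internal l w + exp_out l w) / (2 * exp_total w)) ^+ 2).

Definition unit_weight : {set 'I_L} -> R := fun _ => 1.

Definition retention (l : 'I_L) : R :=
  let s := comm_size l in
  let phat := exp_internal l unit_weight / (2^-1 * (s * (s - 1))) in
  let qhat := exp_out l unit_weight / (s * (n%:R - s)) in
  qhat / phat.

(* weights after ReduceWeight on every layer of Rd: an edge internal to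
   communities of the layers in S gets weight prod_{l in S, l in Rd} q_l *)
Definition reduced_weight (Rd : {set 'I_L}) : {set 'I_L} -> R :=
  fun S => \prod_(l in S :&: Rd) retention l.

End MSBM.

(* Main.v *)
Require Import Defs.
From mathcomp Require Import all_boot all_order all_algebra.
From mathcomp Require Import ring lra zify.
Set Implicit Arguments. Unset Strict Implicit. Unset Printing Implicit Defensive.
Import Order.TTheory GRing.Theory Num.Theory.
Local Open Scope ring_scope.

Section Core.
Variable R : realFieldType.

Lemma fin_half (ra rb pa pb : R) : 1/20 <= pa -> pa <= 1 -> 1/20 <= pb -> pb <= 1 ->
  0 < ra -> ra <= 1 -> 0 < rb -> rb <= 1 ->
  9/16 * (pb - 1/32) <= rb -> 4 * pa < pb ->
  0 < ra * (4 * pa - pb) + rb * (4 * pb - pa).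
Proof.
move=> pa1 pa2 pb1 pb2 ra1 ra2 rb1 rb2 rb3 H1.
have E1 : 4 * pa - pb <= ra * (4 * pa - pb) by nra.
have E2 : 9/16 * (pb - 1/32) * (4 * pb - pa) <= rb * (4 * pb - pa).
  by apply: ler_wpM2r; lra.
have E3 : 0 <= (4 - 9/16 * (pb - 1/32)) * (pa - 1/20) by apply: mulr_ge0; lra.
have E4 : 0 <= (pb - 1/4) ^+ 2 by apply: sqr_ge0.
have E5 : 9/16 * (pb - 1/32) * (4 * pb - pa) + (4 * pa - pb) =
   9/4 * (pb - 1/4) ^+ 2 + (17/640 * pb + 617/10240) + (4 - 9/16 * (pb - 1/32)) * (pa - 1/20).
  by field.
lra.
Qed.

Lemma pos4 (a b c d : R) : 0 < a -> 0 <= b -> 0 <= c -> 0 <= d -> 0 < a + b + c + d.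
Proof. move=> *; lra. Qed.
Lemma pos3 (a b c : R) : 0 < a -> 0 <= b -> 0 <= c -> 0 < a + b + c.
Proof. move=> *; lra. Qed.

Lemma fin_ineq (ra rb pa pb : R) : 1/20 <= pa -> pa <= 1 -> 1/20 <= pb -> pb <= 1 ->
  0 < ra -> ra <= 1 -> 0 < rb -> rb <= 1 ->
  9/16 * (pa - 1/32) <= ra -> 9/16 * (pb - 1/32) <= rb ->
  0 < ra * (4 * pa - pb) + rb * (4 * pb - pa).
Proof.
move=> pa1 pa2 pb1 pb2 ra1 ra2 rb1 rb2 ra3 rb3.
have [H1|H1] := lerP pb (4 * pa); have [H2|H2] := lerP pa (4 * pb).
- have [H3|H3] := ltrP 0 (4 * pa - pb).
  + have : 0 < ra * (4 * pa - pb) by apply: mulr_gt0.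
    have : 0 <= rb * (4 * pb - pa) by apply: mulr_ge0; lra.
    lra.
  + have : 0 < rb * (4 * pb - pa) by apply: mulr_gt0 => //; lra.
    have : 0 <= ra * (4 * pa - pb) by apply: mulr_ge0; lra.
    lra.
- rewrite addrC; exact: fin_half.
- exact: fin_half.
- lra.
Qed.

Lemma core (a_t ata atb atab aa ab aab qa qb K pa pb : R) :
 0 < a_t -> 0 <= ata -> 0 <= atb -> 0 <= atab -> 0 <= aa -> 0 <= ab -> 0 <= aab ->
 0 < qa -> qa <= 1 -> 0 < qb -> qb <= 1 ->
 0 <= ata * aab - atab * aa -> 0 <= atb * aab - atab * ab ->
 3 * K * pa <= a_t * aa -> 3 * K * pb <= a_t * ab -> ata * ab - atb * aa = K * (pb - pa) ->
 0 < K -> 0 < (1 - qa) * (4 * pa - pb) + (1 - qb) * (4 * pb - pa) ->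
 (a_t + ata + atb + atab) * (aa * qa + ab * qb + aab * (qa * qb)) <
 (a_t + ata * qa + atb * qb + atab * (qa * qb)) * (aa + ab + aab).
Proof.
move=> h1 h2 h3 h4 h5 h6 h7 q1 q2 q3 q4 f1 f2 f3 f4 f5 hK hF.
rewrite -subr_gt0.
have -> : (a_t + ata * qa + atb * qb + atab * (qa * qb)) * (aa + ab + aab) -
  (a_t + ata + atb + atab) * (aa * qa + ab * qb + aab * (qa * qb)) =
  ((1 - qa) * (a_t * aa) + (1 - qb) * (a_t * ab) + (qa - qb) * (ata * ab - atb * aa))
  + (1 - qa * qb) * (a_t * aab) + qa * (1 - qb) * (ata * aab - atab * aa)
  + qb * (1 - qa) * (atb * aab - atab * ab) by ring.
have T3 : 0 <= (1 - qa * qb) * (a_t * aab).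
  apply: mulr_ge0; last by apply: mulr_ge0 => //; lra.
  have : qa * qb <= 1 by nra. lra.
have T4 : 0 <= qa * (1 - qb) * (ata * aab - atab * aa).
  by apply: mulr_ge0 => //; apply: mulr_ge0; lra.
have T5 : 0 <= qb * (1 - qa) * (atb * aab - atab * ab).
  by apply: mulr_ge0 => //; apply: mulr_ge0; lra.
have T126 : 0 < (1 - qa) * (a_t * aa) + (1 - qb) * (a_t * ab) + (qa - qb) * (ata * ab - atb * aa).
  rewrite f5.
  have : (1 - qa) * (3 * K * pa) <= (1 - qa) * (a_t * aa) by apply: ler_wpM2l; lra.
  have : (1 - qb) * (3 * K * pb) <= (1 - qb) * (a_t * ab) by apply: ler_wpM2l; lra.
  have : 0 < K * ((1 - qa) * (4 * pa - pb) + (1 - qb) * (4 * pb - pa)) by apply: mulr_gt0.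
  move=> H1 H2 H3.
  have E : (1 - qa) * (3 * K * pa) + (1 - qb) * (3 * K * pb) + (qa - qb) * (K * (pb - pa))
     = K * ((1 - qa) * (4 * pa - pb) + (1 - qb) * (4 * pb - pa)) by ring.
  lra.
lra.
Qed.
End Core.
Section Q.
Variable R : realFieldType.
Lemma qbound (n x p x1 p1 x2 p2 Aq Bq : R) :
  0 < n -> 0 < x -> x <= 1/4 -> 1/20 <= p -> p <= 1 ->
  0 <= x1 -> x1 <= 1/4 -> 0 <= p1 -> p1 <= 1 ->
  0 <= x2 -> x2 <= 1/4 -> 0 <= p2 -> p2 <= 1 -> 32 <= n * x ->
  Aq = n^+2 * x * (1 - (1 - p) * ((1 - x1 * p1) * (1 - x2 * p2)))
       - n * (1 - (1 - p) * (1 - p1) * (1 - p2)) ->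
  Bq = n^+2 * (1 - x) * (1 - (1 - x1 * p1) * (1 - x2 * p2)) ->
  0 < Aq -> 0 < Bq ->
  0 < Bq * (n * x - 1) / (Aq * (n - n * x)) /\
  9/16 * (p - 1/32) <= 1 - Bq * (n * x - 1) / (Aq * (n - n * x)) /\
  Bq * (n * x - 1) / (Aq * (n - n * x)) <= 1.
Proof.
move=> hn hx hx' hp hp' hx1 hx1' hp1 hp1' hx2 hx2' hp2 hp2' hm EA EB hA hB.
set m := n * x in hm *.
have hD : 0 < Aq * (n - m).
  apply: mulr_gt0 => //; rewrite /m; nra.
have hq : 0 < Bq * (m - 1) / (Aq * (n - m)).
  by apply: divr_gt0 => //; apply: mulr_gt0 => //; lra.
set c := 9/16 * (p - 1/32).
have hc : 0 <= c by rewrite /c; lra.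
suff H : Bq * (m - 1) / (Aq * (n - m)) <= 1 - c.
  by split => //; split; lra.
rewrite ler_pdivrMr //.
set g := (1 - x1 * p1) * (1 - x2 * p2).
set e := 1 - (1 - p) * (1 - p1) * (1 - p2).
have hg1 : 9/16 <= g.
  rewrite /g.
  have : 3/4 <= 1 - x1 * p1 by nra.
  have : 3/4 <= 1 - x2 * p2 by nra.
  nra.
have hg2 : g <= 1.
  rewrite /g.
  have : 0 <= 1 - x1 * p1 <= 1 by apply/andP; split; nra.
  have : 0 <= 1 - x2 * p2 <= 1 by apply/andP; split; nra.
  move=> /andP [h1 h2] /andP [h3 h4]; nra.
have he1 : e <= 1.
  rewrite /e.
  have : 0 <= (1 - p) * (1 - p1) * (1 - p2) by apply: mulr_ge0; [apply: mulr_ge0|]; lra.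
  lra.
have he0 : 0 <= e.
  rewrite /e.
  have : (1 - p) * (1 - p1) <= 1 by nra.
  have : 0 <= (1 - p) * (1 - p1) by apply: mulr_ge0; lra.
  nra.
set al := 1 - (1 - p) * g.
have hal : al <= 1.
  rewrite /al.
  have : 0 <= (1 - p) * g by apply: mulr_ge0; lra.
  lra.
have E1 : (1 - c) * (Aq * (n - m)) - Bq * (m - 1) =
   n * n * (1 - x) * (m * p * g - (e - 1 + g) - c * (m * al - e)).
  rewrite EA EB /m /al /g /e; ring.
have h1 : c * (m * al - e) <= c * m.
  apply: ler_wpM2l => //.
  have : m * al <= m by rewrite -{2}[m]mulr1; apply: ler_wpM2l; lra.
  lra.
have hmp : 1 <= m * p by nra.
have h2 : 9/16 * (m * p - 1) <= g * (m * p - 1) by apply: ler_wpM2r; lra.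
have inner : 0 <= m * p * g - (e - 1 + g) - c * (m * al - e).
  have E2 : g * (m * p - 1) = m * p * g - g by ring.
  have E3 : 9/16 * (m * p - 1) - c * m = 9/16 * (m / 32 - 1) by rewrite /c; field.
  have : 0 <= 9/16 * (m / 32 - 1) by lra.
  lra.
have : 0 <= n * n * (1 - x) * (m * p * g - (e - 1 + g) - c * (m * al - e)).
  apply: mulr_ge0 => //; apply: mulr_ge0; [apply: mulr_ge0|]; lra.
lra.
Qed.
End Q.

Section Key.
Variables (R : realFieldType) (n xt xa xb pt pa pb : R).
Definition pe (it ia ib : bool) : R :=
  n ^+ 2 * ((if it then xt else 1 - xt) * (if ia then xa else 1 - xa) * (if ib then xb else 1 - xb))
  - (if it && ia && ib then n else 0).
Definition ep (it ia ib : bool) : R :=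
  1 - (if it then 1 - pt else 1) * (if ia then 1 - pa else 1) * (if ib then 1 - pb else 1).
Definition aS it ia ib := pe it ia ib * ep it ia ib.
Definition qA := (aS true false false + aS false false true + aS true false true) * (n * xa - 1) /
  ((aS false true false + aS true true false + aS false true true + aS true true true) * (n - n * xa)).
Definition qB := (aS true false false + aS false true false + aS true true false) * (n * xb - 1) /
  ((aS false false true + aS true false true + aS false true true + aS true true true) * (n - n * xb)).
Definition KA0 := aS true false false + aS true true false + aS true false true + aS true true true.
Definition KB0 := aS false true false + aS false false true + aS false true true.
Definition KA1 := aS true false false + aS true true false * qA + aS true false true * qB
  + aS true true true * (qA * qB).
Definition KB1 := aS false true false * qA + aS false false true * qB + aS false true true * (qA * qB).

Ltac leaf := solve [assumption | exact: ltW].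
Ltac pos := repeat (first [leaf | match goal with
  | |- is_true (0 < _ * _) => apply: mulr_gt0
  | |- is_true (0 <= _ * _) => apply: mulr_ge0
  | |- is_true (0 <= _ + _) => apply: addr_ge0 end]).

Lemma key : 0 < xt -> xt <= 1/4 -> 0 < xa -> xa <= 1/4 -> 0 < xb -> xb <= 1/4 ->
  1/20 <= pt -> pt <= 1 -> 1/20 <= pa -> pa <= 1 -> 1/20 <= pb -> pb <= 1 ->
  2 <= n * (xt * xa * xb) ->
  [/\ 0 < KA0, 0 < KB0, 0 < KA1, 0 < KB1 & KA0 * KB1 < KA1 * KB0].
Proof.
move=> xt1 xt2 xa1 xa2 xb1 xb2 pt1 pt2 pa1 pa2 pb1 pb2 hn.
have xt3 : 0 < 1 - xt by lra.
have xa3 : 0 < 1 - xa by lra.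
have xb3 : 0 < 1 - xb by lra.
have pt0 : 0 < pt by lra.
have pa0 : 0 < pa by lra.
have pb0 : 0 < pb by lra.
have pt3 : 0 <= 1 - pt by lra.
have pa3 : 0 <= 1 - pa by lra.
have pb3 : 0 <= 1 - pb by lra.
have xa4 : 0 <= 1 - 4 * xa by lra.
have xb4 : 0 <= 1 - 4 * xb by lra.
have hP : 0 < xt * xa * xb by pos.
have n0 : 0 < n.
  have : 0 < n * (xt * xa * xb) by lra.
  by rewrite pmulr_lgt0.
have n2 : 0 < n ^+ 2 by apply: exprn_gt0.
have n3 : 0 < n ^+ 3 by apply: exprn_gt0.
have n4 : 0 < n ^+ 4 by apply: exprn_gt0.
have xa5 : 0 <= xa ^+ 2 by apply: sqr_ge0.
have xb5 : 0 <= xb ^+ 2 by apply: sqr_ge0.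
have htb : xt * xb <= 1/16.
  have : xt * xb <= xt * (1/4) by apply: ler_wpM2l; lra.
  lra.
have hta : xt * xa <= 1/16.
  have : xt * xa <= xt * (1/4) by apply: ler_wpM2l; lra.
  lra.
have hma : 32 <= n * xa.
  have E : n * (xt * xa * xb) = n * xa * (xt * xb) by ring.
  have : n * xa * (xt * xb) <= n * xa * (1/16) by apply: ler_wpM2l => //; pos.
  lra.
have hmb : 32 <= n * xb.
  have E : n * (xt * xa * xb) = n * xb * (xt * xa) by ring.
  have : n * xb * (xt * xa) <= n * xb * (1/16) by apply: ler_wpM2l => //; pos.
  lra.
have hm3 : 0 < n * (xt * xa * xb) - 1 by lra.
have ut : (1 - pt) <= 1 by lra.
have ua : (1 - pa) <= 1 by lra.
have ub : (1 - pb) <= 1 by lra.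
have uta : (1 - pt) * (1 - pa) <= 1 by nra.
have utb : (1 - pt) * (1 - pb) <= 1 by nra.
have uab : (1 - pa) * (1 - pb) <= 1 by nra.
have uta0 : 0 <= (1 - pt) * (1 - pa) by pos.
have utab : (1 - pt) * (1 - pa) * (1 - pb) <= 1 by nra.
set eta := 1 - (1 - pt) * (1 - pa).
set etb := 1 - (1 - pt) * (1 - pb).
set eab := 1 - (1 - pa) * (1 - pb).
set etab := 1 - (1 - pt) * (1 - pa) * (1 - pb).
have heta : 0 <= eta by rewrite /eta; lra.
have hetb : 0 <= etb by rewrite /etb; lra.
have heab : 0 <= eab by rewrite /eab; lra.
have hetab : 0 <= etab by rewrite /etab; lra.
clear ut ua ub uta utb uab uta0 utab.
have Et : aS true false false = n ^+ 2 * (xt * (1 - xa) * (1 - xb)) * pt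
  by rewrite /aS /pe /ep /=; ring.
have Eta : aS true true false = n ^+ 2 * (xt * xa * (1 - xb)) * eta
  by rewrite /aS /pe /ep /eta /=; ring.
have Etb : aS true false true = n ^+ 2 * (xt * (1 - xa) * xb) * etb
  by rewrite /aS /pe /ep /etb /=; ring.
have Etab : aS true true true = n * (n * (xt * xa * xb) - 1) * etab
  by rewrite /aS /pe /ep /etab /=; ring.
have Ea : aS false true false = n ^+ 2 * ((1 - xt) * xa * (1 - xb)) * pa
  by rewrite /aS /pe /ep /=; ring.
have Eb : aS false false true = n ^+ 2 * ((1 - xt) * (1 - xa) * xb) * pb
  by rewrite /aS /pe /ep /=; ring.
have Eab : aS false true true = n ^+ 2 * ((1 - xt) * xa * xb) * eab
  by rewrite /aS /pe /ep /eab /=; ring.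
have hat : 0 < aS true false false by rewrite Et; pos.
have hata : 0 <= aS true true false by rewrite Eta; pos.
have hatb : 0 <= aS true false true by rewrite Etb; pos.
have hatab : 0 <= aS true true true by rewrite Etab; pos.
have haa : 0 < aS false true false by rewrite Ea; pos.
have hab : 0 < aS false false true by rewrite Eb; pos.
have haab : 0 <= aS false true true by rewrite Eab; pos.
have haa' : 0 <= aS false true false by leaf.
have hab' : 0 <= aS false false true by leaf.
have [qa1 [qa2 qa3]] : 0 < qA /\ 9/16 * (pa - 1/32) <= 1 - qA /\ qA <= 1.
  rewrite /qA; apply: (qbound (x1 := xt) (p1 := pt) (x2 := xb) (p2 := pb)) => //; try leaf.
  - rewrite Ea Eta Eab Etab /eta /eab /etab; ring.
  - rewrite Et Eb Etb /etb; ring.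
  - exact: pos4.
  - exact: pos3.
have [qb1 [qb2 qb3]] : 0 < qB /\ 9/16 * (pb - 1/32) <= 1 - qB /\ qB <= 1.
  rewrite /qB; apply: (qbound (x1 := xt) (p1 := pt) (x2 := xa) (p2 := pa)) => //; try leaf.
  - rewrite Eb Etb Eab Etab /etb /eab /etab; ring.
  - rewrite Et Ea Eta /eta; ring.
  - exact: pos4.
  - exact: pos3.
have ra0 : 0 < 1 - qA by lra.
have rb0 : 0 < 1 - qB by lra.
have ra1 : 1 - qA <= 1 by lra.
have rb1 : 1 - qB <= 1 by lra.
split.
- by rewrite /KA0; apply: pos4.
- by rewrite /KB0; apply: pos3.
- by rewrite /KA1; apply: pos4 => //; pos.
- rewrite /KB1; apply: pos3; pos.
rewrite /KA0 /KB0 /KA1 /KB1.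
set K := n ^+ 4 * (xt * xa * xb * (1 - xt) * (1 - xa) * (1 - xb)) * pt.
have hK : 0 < K by rewrite /K; pos.
apply: (@core _ _ _ _ _ _ _ _ _ _ K pa pb) => //.
- have -> : aS true true false * aS false true true - aS true true true * aS false true false =
    n ^+ 4 * (xt * xa ^+ 2 * xb * (1 - xt) * (1 - xb)) * ((1 - pa) * pt * pb)
    + n ^+ 3 * ((1 - xt) * xa * (1 - xb) * pa) * etab.
    by rewrite Eta Eab Etab Ea /eta /eab /etab; ring.
  pos.
- have -> : aS true false true * aS false true true - aS true true true * aS false false true =
    n ^+ 4 * (xt * xa * xb ^+ 2 * (1 - xt) * (1 - xa)) * ((1 - pb) * pt * pa)
    + n ^+ 3 * ((1 - xt) * (1 - xa) * xb * pb) * etab.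
    by rewrite Etb Eab Etab Eb /etb /eab /etab; ring.
  pos.
- rewrite -subr_ge0.
  have -> : aS true false false * aS false true false - 3 * K * pa =
    n ^+ 4 * (xt * xa * (1 - xt) * (1 - xa) * (1 - xb) * pt * pa) * (1 - 4 * xb).
    by rewrite Et Ea /K; ring.
  pos.
- rewrite -subr_ge0.
  have -> : aS true false false * aS false false true - 3 * K * pb =
    n ^+ 4 * (xt * xb * (1 - xt) * (1 - xa) * (1 - xb) * pt * pb) * (1 - 4 * xa).
    by rewrite Et Eb /K; ring.
  pos.
- by rewrite Eta Eb Etb Ea /K /eta /etb; ring.
- by apply: fin_ineq.
Qed.
End Key.

Definition s3 (b0 b1 b2 : bool) : {set 'I_3} := [set i : 'I_3 | nth false [:: b0; b1; b2] i].
Notation o0 := (@Ordinal 3 0 isT).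
Notation o1 := (@Ordinal 3 1 isT).
Notation o2 := (@Ordinal 3 2 isT).

Lemma sum_set3 (R : nmodType) (F : {set 'I_3} -> R) :
  \sum_(S : {set 'I_3}) F S =
  \sum_(b0 : bool) \sum_(b1 : bool) \sum_(b2 : bool) F (s3 b0 b1 b2).
Proof.
rewrite (reindex (fun b : bool * bool * bool => s3 b.1.1 b.1.2 b.2)) /=.
  by rewrite pair_bigA /= pair_bigA.
exists (fun S : {set 'I_3} => (o0 \in S, o1 \in S, o2 \in S)).
  by move=> [[b0 b1] b2] _; rewrite !inE.
move=> S _; apply/setP => i; rewrite inE.
case: i => [[|[|[|//]]] Hi] /=;
  by congr (_ \in S); apply: val_inj.
Qed.

Lemma sum_set3P (R : nmodType) (P : pred {set 'I_3}) (F : {set 'I_3} -> R) :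
  \sum_(S : {set 'I_3} | P S) F S =
  \sum_(b0 : bool) \sum_(b1 : bool) \sum_(b2 : bool)
     (if P (s3 b0 b1 b2) then F (s3 b0 b1 b2) else 0).
Proof. by rewrite big_mkcond sum_set3. Qed.

Lemma prod3 (R : comPzSemiRingType) (F : 'I_3 -> R) (A : {set 'I_3}) :
  \prod_(l in A) F l =
  (if o0 \in A then F o0 else 1) * (if o1 \in A then F o1 else 1) * (if o2 \in A then F o2 else 1).
Proof.
rewrite big_mkcond /= !big_ord_recl big_ord0 mulr1 mulrA.
rewrite (_ : lift _ (lift _ _) = o2); last by apply: val_inj.
rewrite (_ : lift _ _ = o1); last by apply: val_inj.
by rewrite (_ : ord0 = o0); last by apply: val_inj.
Qed.

Lemma card_s3 b0 b1 b2 : #|s3 b0 b1 b2| = (b0 + b1 + b2)%N.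
Proof.
rewrite -sum1_card big_mkcond /= !big_ord_recl big_ord0 !inE /=.
by case: b0; case: b1; case: b2.
Qed.

Lemma sub_s3 a0 a1 a2 b0 b1 b2 :
  (s3 a0 a1 a2 \subset s3 b0 b1 b2) = [&& a0 ==> b0, a1 ==> b1 & a2 ==> b2].
Proof.
apply/subsetP/idP.
- move=> H; apply/and3P; split; apply/implyP => Ha.
  + by have := H o0; rewrite !inE /=; apply.
  + by have := H o1; rewrite !inE /=; apply.
  + by have := H o2; rewrite !inE /=; apply.
- move=> /and3P [H0 H1 H2] [[|[|[|//]]] Hi]; rewrite !inE /=.
  + exact: (implyP H0).
  + exact: (implyP H1).
  + exact: (implyP H2).
Qed.

Lemma in_s3 b0 b1 b2 i : (i \in s3 b0 b1 b2) = nth false [:: b0; b1; b2] i.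
Proof. by rewrite inE. Qed.

Lemma e01 : (o0 == o1) = false. Proof. by []. Qed.
Lemma e02 : (o0 == o2) = false. Proof. by []. Qed.
Lemma e10 : (o1 == o0) = false. Proof. by []. Qed.
Lemma e12 : (o1 == o2) = false. Proof. by []. Qed.
Lemma e20 : (o2 == o0) = false. Proof. by []. Qed.
Lemma e21 : (o2 == o1) = false. Proof. by []. Qed.

Ltac expand :=
  repeat rewrite sum_set3P; rewrite !big_bool /= ?in_s3 /= /pairs_exact;
  repeat rewrite sum_set3P; rewrite !big_bool /= ?sub_s3 /=;
  rewrite /pairs_atleast /edge_prob /reduced_weight /unit_weight;
  repeat rewrite prod3; rewrite ?card_s3 /= ?inE ?in_s3 /= ?eqxx ?e01 ?e02 ?e10 ?e12 ?e20 ?e21 /=;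
  rewrite !(addn0, add0n, addn1, subnn, subn0, subSS) /=.

Lemma prodI3 (R : comPzSemiRingType) (F : 'I_3 -> R) :
  \prod_(l < 3) F l = F o0 * F o1 * F o2.
Proof.
rewrite !big_ord_recl big_ord0 mulr1 mulrA.
rewrite (_ : lift _ (lift _ _) = o2); last by apply: val_inj.
rewrite (_ : lift _ _ = o1); last by apply: val_inj.
by rewrite (_ : ord0 = o0); last by apply: val_inj.
Qed.

Lemma frac_lt (R : realFieldType) (A0 B0 A1 B1 : R) :
  0 < A0 -> 0 < B0 -> 0 < A1 -> 0 < B1 -> A0 * B1 < A1 * B0 ->
  A0 / (A0 + B0) < A1 / (A1 + B1).
Proof.
move=> h1 h2 h3 h4 h5; rewrite -subr_gt0.
have -> : A1 / (A1 + B1) - A0 / (A0 + B0) = (A1 * B0 - A0 * B1) / ((A1 + B1) * (A0 + B0)).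
  field; apply/andP; split; rewrite lt0r_neq0 //; lra.
apply: divr_gt0; first lra.
apply: mulr_gt0; lra.
Qed.

Section Gen.
Variables (R : realFieldType) (n : nat) (nl : 'I_3 -> nat) (p : 'I_3 -> R).

Definition Asum l (w : {set 'I_3} -> R) :=
  \sum_(S : {set 'I_3} | l \in S) pairs_exact R n nl S * edge_prob p S * w S.
Definition Bsum l (w : {set 'I_3} -> R) :=
  \sum_(S : {set 'I_3} | l \notin S) pairs_exact R n nl S * edge_prob p S * w S.

Lemma mod_eq l w : (nl l)%:R != 0 :> R -> Asum l w + Bsum l w != 0 ->
  modularity n nl p l w = Asum l w / (Asum l w + Bsum l w) - ((nl l)%:R)^-1.
Proof.
move=> HN HAB.
have Et : exp_total n nl p w = 2^-1 * (Asum l w + Bsum l w).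
  by rewrite /exp_total (bigID (fun S : {set 'I_3} => l \in S)) /=.
have Ei : exp_internal n nl p l w = (2 * (nl l)%:R)^-1 * Asum l w by [].
have Eo : exp_out n nl p l w = ((nl l)%:R)^-1 * Bsum l w by [].
rewrite /modularity Ei Eo Et sumr_const card_ord -mulr_natl.
by field; rewrite HN HAB.
Qed.

Lemma ret_eq l : 1 < (nl l)%:R :> R -> (nl l)%:R < n%:R :> R ->
  retention n nl p l = Bsum l (@unit_weight R 3) * (n%:R * ((nl l)%:R)^-1 - 1) /
     (Asum l (@unit_weight R 3) * (n%:R - n%:R * ((nl l)%:R)^-1)).
Proof.
move=> H1 H2.
have HN : (nl l)%:R != 0 :> R by rewrite lt0r_neq0 //; lra.
have Hn : n%:R != 0 :> R by rewrite lt0r_neq0 //; lra.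
have H3 : n%:R * (nl l)%:R - n%:R != 0 :> R.
  rewrite lt0r_neq0 //.
  have : n%:R * 1 < n%:R * (nl l)%:R :> R by rewrite ltr_pM2l //; lra.
  lra.
have H4 : n%:R + -1 * (nl l)%:R != 0 :> R by rewrite lt0r_neq0 //; lra.
have Ei : exp_internal n nl p l (@unit_weight R 3) = (2 * (nl l)%:R)^-1 * Asum l (@unit_weight R 3) by [].
have Eo : exp_out n nl p l (@unit_weight R 3) = ((nl l)%:R)^-1 * Bsum l (@unit_weight R 3) by [].
rewrite /retention /comm_size Ei Eo.
case: (eqVneq (Asum l (@unit_weight R 3)) 0) => HA.
  by rewrite HA !(mulr0, mul0r, invr0).
by field; rewrite HN H3 HA H4 Hn.
Qed.
End Gen.

Lemma prodI3n (F : 'I_3 -> nat) : (\prod_(l < 3) F l = F o0 * F o1 * F o2)%N.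
Proof.
rewrite !big_ord_recl big_ord0 muln1 mulnA.
rewrite (_ : lift _ (lift _ _) = o2); last by apply: val_inj.
rewrite (_ : lift _ _ = o1); last by apply: val_inj.
by rewrite (_ : ord0 = o0); last by apply: val_inj.
Qed.

Unset Implicit Arguments.

Theorem theorem15 (R : realFieldType) (n : nat) (nl : 'I_3 -> nat)
    (p : 'I_3 -> R)
    (Hnl : forall l, (4 <= nl l)%N)
    (Hp : forall l, (20%:R)^-1 <= p l <= 1)
    (Hn : (2 * \prod_(l < 3) nl l <= n)%N)
    (t : 'I_3) :
  modularity n nl p t (@unit_weight R 3) <
  modularity n nl p t (reduced_weight n nl p [set~ t]).
Proof.
have HN4 : forall l, (4 : R) <= (nl l)%:R by move=> l; rewrite (ler_nat R 4) Hnl.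
have HN0 : forall l, (nl l)%:R != 0 :> R.
  by move=> l; rewrite lt0r_neq0 //; have := HN4 l; lra.
have Hr1 : forall l, 1 < (nl l)%:R :> R by move=> l; have := HN4 l; lra.
have Hr2 : forall l, (nl l)%:R < n%:R :> R.
  move=> l; rewrite ltr_nat.
  have : (nl l <= \prod_(i < 3) nl i)%N.
    rewrite (bigD1 l) //= leq_pmulr // prodn_gt0 // => i.
    by have := Hnl i; lia.
  have := Hnl l; lia.
have Hn0 : n%:R != 0 :> R by rewrite lt0r_neq0 //; have := Hr2 o0; have := Hr1 o0; lra.
pose x := fun l : 'I_3 => ((nl l)%:R : R)^-1.
have hx1 : forall l, 0 < x l by move=> l; rewrite /x invr_gt0; have := HN4 l; lra.
have hx2 : forall l, x l <= 1/4.
  move=> l; rewrite /x; have h := HN4 l.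
  rewrite -div1r ler_pdivrMr; lra.
have hp1 : forall l, 1/20 <= p l by move=> l; have /andP [h _] := Hp l; rewrite div1r.
have hp2 : forall l, p l <= 1 by move=> l; have /andP [_ h] := Hp l.
have hnx : 2 <= n%:R * (x o0 * x o1 * x o2).
  have Hnr : 2 * ((nl o0)%:R * (nl o1)%:R * (nl o2)%:R) <= n%:R :> R.
    by rewrite -!natrM ler_nat -prodI3n.
  have E : 2 * ((nl o0)%:R * (nl o1)%:R * (nl o2)%:R) * (x o0 * x o1 * x o2) = 2 :> R.
    by rewrite /x; field; rewrite !HN0.
  have : 2 * ((nl o0)%:R * (nl o1)%:R * (nl o2)%:R) * (x o0 * x o1 * x o2) <=
         n%:R * (x o0 * x o1 * x o2).
    apply: ler_wpM2r => //; apply: mulr_ge0; [apply: mulr_ge0|]; apply: ltW; exact: hx1.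
  lra.
have HN0o0 := HN0 o0. have HN0o1 := HN0 o1. have HN0o2 := HN0 o2.
suff [h1 h2 h3 h4 h5] : [/\ 0 < Asum n nl p t (@unit_weight R 3),
    0 < Bsum n nl p t (@unit_weight R 3),
    0 < Asum n nl p t (reduced_weight n nl p [set~ t]),
    0 < Bsum n nl p t (reduced_weight n nl p [set~ t]) &
    Asum n nl p t (@unit_weight R 3) * Bsum n nl p t (reduced_weight n nl p [set~ t]) <
    Asum n nl p t (reduced_weight n nl p [set~ t]) * Bsum n nl p t (@unit_weight R 3)].
  rewrite !mod_eq //; try by rewrite lt0r_neq0 //; apply: addr_gt0.
  by rewrite ltrD2r; apply: frac_lt.
case: t => [[|[|[|//]]] Ht].
- have -> : Ordinal Ht = o0 by apply: val_inj.
  have hnp : 2 <= n%:R * (x o0 * x o1 * x o2).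
    apply: (le_trans hnx); rewrite le_eqVlt; apply/orP; left; apply/eqP; ring.
  have [k1 k2 k3 k4 k5] := @key _ n%:R (x o0) (x o1) (x o2) (p o0) (p o1) (p o2)
    (hx1 _) (hx2 _) (hx1 _) (hx2 _) (hx1 _) (hx2 _) (hp1 _) (hp2 _) (hp1 _) (hp2 _) (hp1 _) (hp2 _) hnp.
  have Ra : retention n nl p o1 = qA n%:R (x o0) (x o1) (x o2) (p o0) (p o1) (p o2).
    rewrite ret_eq //; rewrite /qA; congr (_ * (_ - 1) / (_ * (_ - _))).
    + by rewrite /Bsum; expand; rewrite /aS /pe /ep /x /=; field; rewrite ?HN0o0 ?HN0o1 ?HN0o2 ?Hn0 //.
    + by rewrite /Asum; expand; rewrite /aS /pe /ep /x /=; field; rewrite ?HN0o0 ?HN0o1 ?HN0o2 ?Hn0 //.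
  have Rb : retention n nl p o2 = qB n%:R (x o0) (x o1) (x o2) (p o0) (p o1) (p o2).
    rewrite ret_eq //; rewrite /qB; congr (_ * (_ - 1) / (_ * (_ - _))).
    + by rewrite /Bsum; expand; rewrite /aS /pe /ep /x /=; field; rewrite ?HN0o0 ?HN0o1 ?HN0o2 ?Hn0 //.
    + by rewrite /Asum; expand; rewrite /aS /pe /ep /x /=; field; rewrite ?HN0o0 ?HN0o1 ?HN0o2 ?Hn0 //.
  have EA0 : Asum n nl p o0 (@unit_weight R 3) = KA0 n%:R (x o0) (x o1) (x o2) (p o0) (p o1) (p o2).
    by rewrite /Asum; expand; rewrite /KA0 /aS /pe /ep /x /=; field; rewrite ?HN0o0 ?HN0o1 ?HN0o2 ?Hn0 //.
  have EB0 : Bsum n nl p o0 (@unit_weight R 3) = KB0 n%:R (x o0) (x o1) (x o2) (p o0) (p o1) (p o2).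
    by rewrite /Bsum; expand; rewrite /KB0 /aS /pe /ep /x /=; field; rewrite ?HN0o0 ?HN0o1 ?HN0o2 ?Hn0 //.
  have EA1 : Asum n nl p o0 (reduced_weight n nl p [set~ o0]) = KA1 n%:R (x o0) (x o1) (x o2) (p o0) (p o1) (p o2).
    by rewrite /Asum; expand; rewrite Ra Rb /KA1 /aS /pe /ep /x /=; field; rewrite ?HN0o0 ?HN0o1 ?HN0o2 ?Hn0 //.
  have EB1 : Bsum n nl p o0 (reduced_weight n nl p [set~ o0]) = KB1 n%:R (x o0) (x o1) (x o2) (p o0) (p o1) (p o2).
    by rewrite /Bsum; expand; rewrite Ra Rb /KB1 /aS /pe /ep /x /=; field; rewrite ?HN0o0 ?HN0o1 ?HN0o2 ?Hn0 //.
  by rewrite EA0 EB0 EA1 EB1; split.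
- have -> : Ordinal Ht = o1 by apply: val_inj.
  have hnp : 2 <= n%:R * (x o1 * x o0 * x o2).
    apply: (le_trans hnx); rewrite le_eqVlt; apply/orP; left; apply/eqP; ring.
  have [k1 k2 k3 k4 k5] := @key _ n%:R (x o1) (x o0) (x o2) (p o1) (p o0) (p o2)
    (hx1 _) (hx2 _) (hx1 _) (hx2 _) (hx1 _) (hx2 _) (hp1 _) (hp2 _) (hp1 _) (hp2 _) (hp1 _) (hp2 _) hnp.
  have Ra : retention n nl p o0 = qA n%:R (x o1) (x o0) (x o2) (p o1) (p o0) (p o2).
    rewrite ret_eq //; rewrite /qA; congr (_ * (_ - 1) / (_ * (_ - _))).
    + by rewrite /Bsum; expand; rewrite /aS /pe /ep /x /=; field; rewrite ?HN0o0 ?HN0o1 ?HN0o2 ?Hn0 //.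
    + by rewrite /Asum; expand; rewrite /aS /pe /ep /x /=; field; rewrite ?HN0o0 ?HN0o1 ?HN0o2 ?Hn0 //.
  have Rb : retention n nl p o2 = qB n%:R (x o1) (x o0) (x o2) (p o1) (p o0) (p o2).
    rewrite ret_eq //; rewrite /qB; congr (_ * (_ - 1) / (_ * (_ - _))).
    + by rewrite /Bsum; expand; rewrite /aS /pe /ep /x /=; field; rewrite ?HN0o0 ?HN0o1 ?HN0o2 ?Hn0 //.
    + by rewrite /Asum; expand; rewrite /aS /pe /ep /x /=; field; rewrite ?HN0o0 ?HN0o1 ?HN0o2 ?Hn0 //.
  have EA0 : Asum n nl p o1 (@unit_weight R 3) = KA0 n%:R (x o1) (x o0) (x o2) (p o1) (p o0) (p o2).
    by rewrite /Asum; expand; rewrite /KA0 /aS /pe /ep /x /=; field; rewrite ?HN0o0 ?HN0o1 ?HN0o2 ?Hn0 //.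
  have EB0 : Bsum n nl p o1 (@unit_weight R 3) = KB0 n%:R (x o1) (x o0) (x o2) (p o1) (p o0) (p o2).
    by rewrite /Bsum; expand; rewrite /KB0 /aS /pe /ep /x /=; field; rewrite ?HN0o0 ?HN0o1 ?HN0o2 ?Hn0 //.
  have EA1 : Asum n nl p o1 (reduced_weight n nl p [set~ o1]) = KA1 n%:R (x o1) (x o0) (x o2) (p o1) (p o0) (p o2).
    by rewrite /Asum; expand; rewrite Ra Rb /KA1 /aS /pe /ep /x /=; field; rewrite ?HN0o0 ?HN0o1 ?HN0o2 ?Hn0 //.
  have EB1 : Bsum n nl p o1 (reduced_weight n nl p [set~ o1]) = KB1 n%:R (x o1) (x o0) (x o2) (p o1) (p o0) (p o2).
    by rewrite /Bsum; expand; rewrite Ra Rb /KB1 /aS /pe /ep /x /=; field; rewrite ?HN0o0 ?HN0o1 ?HN0o2 ?Hn0 //.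
  by rewrite EA0 EB0 EA1 EB1; split.
- have -> : Ordinal Ht = o2 by apply: val_inj.
  have hnp : 2 <= n%:R * (x o2 * x o0 * x o1).
    apply: (le_trans hnx); rewrite le_eqVlt; apply/orP; left; apply/eqP; ring.
  have [k1 k2 k3 k4 k5] := @key _ n%:R (x o2) (x o0) (x o1) (p o2) (p o0) (p o1)
    (hx1 _) (hx2 _) (hx1 _) (hx2 _) (hx1 _) (hx2 _) (hp1 _) (hp2 _) (hp1 _) (hp2 _) (hp1 _) (hp2 _) hnp.
  have Ra : retention n nl p o0 = qA n%:R (x o2) (x o0) (x o1) (p o2) (p o0) (p o1).
    rewrite ret_eq //; rewrite /qA; congr (_ * (_ - 1) / (_ * (_ - _))).
    + by rewrite /Bsum; expand; rewrite /aS /pe /ep /x /=; field; rewrite ?HN0o0 ?HN0o1 ?HN0o2 ?Hn0 //.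
    + by rewrite /Asum; expand; rewrite /aS /pe /ep /x /=; field; rewrite ?HN0o0 ?HN0o1 ?HN0o2 ?Hn0 //.
  have Rb : retention n nl p o1 = qB n%:R (x o2) (x o0) (x o1) (p o2) (p o0) (p o1).
    rewrite ret_eq //; rewrite /qB; congr (_ * (_ - 1) / (_ * (_ - _))).
    + by rewrite /Bsum; expand; rewrite /aS /pe /ep /x /=; field; rewrite ?HN0o0 ?HN0o1 ?HN0o2 ?Hn0 //.
    + by rewrite /Asum; expand; rewrite /aS /pe /ep /x /=; field; rewrite ?HN0o0 ?HN0o1 ?HN0o2 ?Hn0 //.
  have EA0 : Asum n nl p o2 (@unit_weight R 3) = KA0 n%:R (x o2) (x o0) (x o1) (p o2) (p o0) (p o1).
    by rewrite /Asum; expand; rewrite /KA0 /aS /pe /ep /x /=; field; rewrite ?HN0o0 ?HN0o1 ?HN0o2 ?Hn0 //.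
  have EB0 : Bsum n nl p o2 (@unit_weight R 3) = KB0 n%:R (x o2) (x o0) (x o1) (p o2) (p o0) (p o1).
    by rewrite /Bsum; expand; rewrite /KB0 /aS /pe /ep /x /=; field; rewrite ?HN0o0 ?HN0o1 ?HN0o2 ?Hn0 //.
  have EA1 : Asum n nl p o2 (reduced_weight n nl p [set~ o2]) = KA1 n%:R (x o2) (x o0) (x o1) (p o2) (p o0) (p o1).
    by rewrite /Asum; expand; rewrite Ra Rb /KA1 /aS /pe /ep /x /=; field; rewrite ?HN0o0 ?HN0o1 ?HN0o2 ?Hn0 //.
  have EB1 : Bsum n nl p o2 (reduced_weight n nl p [set~ o2]) = KB1 n%:R (x o2) (x o0) (x o1) (p o2) (p o0) (p o1).
    by rewrite /Bsum; expand; rewrite Ra Rb /KB1 /aS /pe /ep /x /=; field; rewrite ?HN0o0 ?HN0o1 ?HN0o2 ?Hn0 //.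
  by rewrite EA0 EB0 EA1 EB1; split.
Qed.
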